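(* Let $\mathcal{I} \in \mathrm{Ins}(\Omega,\mathcal{H},\mathcal{K})$ and $\mathcal{J} \in \mathrm{Ins}(\Lambda,\mathcal{H},\mathcal{V})$ be instruments such that the Lüders instruments $\mathcal{I}^{\mathsf{A}^{\mathcal{I}}}$ and $\mathcal{I}^{\mathsf{A}^{\mathcal{J}}}$ of their induced POVMs are compatible. Then $\mathcal{I}$ and $\mathcal{J}$ are compatible.
   Context: All Hilbert spaces are finite-dimensional and complex, and all outcome sets are finite. A POVM $\mathsf{A}\in\mathcal{O}(\Omega,\mathcal{H})$ is a map $x\mapsto \mathsf{A}(x)$ from $\Omega$ to positive operators on $\mathcal{H}$ with $\sum_x \mathsf{A}(x)=I$. An instrument $\mathcal{I}\in\mathrm{Ins}(\Omega,\mathcal{H},\mathcal{K})$ is a family $(\mathcal{I}_x)_{x\in\Omega}$ of completely positive trace-nonincreasing linear maps $\mathcal{L}(\mathcal{H})\to\mathcal{L}(\mathcal{K})$ whose sum is trace preserving; its induced POVM $\mathsf{A}^{\mathcal{I}}$ is defined by $\mathrm{tr}[\mathsf{A}^{\mathcal{I}}(x)\varrho]=\mathrm{tr}[\mathcal{I}_x(\varrho)]$. The Lüders instrument of a POVM $\mathsf{A}\in\mathcal{O}(\Omega,\mathcal{H})$ is $\mathcal{I}^{\mathsf{A}}\in\mathrm{Ins}(\Omega,\mathcal{H},\mathcal{H})$, $\mathcal{I}^{\mathsf{A}}_x(\varrho)=\sqrt{\mathsf{A}(x)}\varrho\sqrt{\mathsf{A}(x)}$. Two instruments $\mathcal{I}\in\mathrm{Ins}(\Omega,\mathcal{H},\mathcal{K})$,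 $\mathcal{J}\in\mathrm{Ins}(\Lambda,\mathcal{H},\mathcal{V})$ are compatible if there is $\mathcal{G}\in\mathrm{Ins}(\Omega\times\Lambda,\mathcal{H},\mathcal{K}\otimes\mathcal{V})$ with $\sum_{x}\mathrm{tr}_{\mathcal{K}}[\mathcal{G}_{(x,y)}(\varrho)]=\mathcal{J}_y(\varrho)$ for all $y$ and $\sum_y\mathrm{tr}_{\mathcal{V}}[\mathcal{G}_{(x,y)}(\varrho)]=\mathcal{I}_x(\varrho)$ for all $x$, for all states $\varrho$. *)

(* Defs.v *)
(* Finite-dimensional complex Hilbert spaces are modelled as
   C^n for a numClosedFieldType C (e.g. algC, or complex R); operators on C^n
   are matrices 'M[C]_n.  The tensor product C^m (x) C^p is C^(m*p) with the
   index convention of mathcomp.real_closed.mxtens (mxtens_index). *)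
From HB Require Import structures.
From mathcomp Require Import all_boot all_order all_algebra.
From mathcomp Require Import mxtens.
From Stdlib Require Import ClassicalEpsilon.
Set Implicit Arguments. Unset Strict Implicit. Unset Printing Implicit Defensive.
Import Order.TTheory GRing.Theory Num.Theory.
Local Open Scope ring_scope.

Section Defs.
Variable C : numClosedFieldType.

Definition adjmx {r s : nat} (A : 'M[C]_(r, s)) : 'M[C]_(s, r) :=
  (map_mx Num.conj A)^T.

Definition psdmx {n : nat} (A : 'M[C]_n) : Prop :=
  forall v : 'cV[C]_n, 0 <= (adjmx v *m A *m v) 0 0.

Definition state {n : nat} (rho : 'M[C]_n) : Prop := psdmx rho /\ \tr rho = 1.

Definition is_linear {n m : nat} (f : 'M[C]_n -> 'M[C]_m) : Prop :=
  forall (a : C) (X Y : 'M[C]_n), f (a *: X + Y) = a *: f X + f Y.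

Definition mxblock_of {k n : nat} (X : 'M[C]_(k * n)) (a c : 'I_k) : 'M[C]_n :=
  \matrix_(b, d) X (mxtens_index (a, b)) (mxtens_index (c, d)).

(* id_k (x) f : L(C^k (x) C^n) -> L(C^k (x) C^m) *)
Definition ampliate {n m : nat} (k : nat) (f : 'M[C]_n -> 'M[C]_m)
  (X : 'M[C]_(k * n)) : 'M[C]_(k * m) :=
  \matrix_(i, j) f (mxblock_of X (mxtens_unindex i).1 (mxtens_unindex j).1)
                   (mxtens_unindex i).2 (mxtens_unindex j).2.

Definition completely_positive {n m : nat} (f : 'M[C]_n -> 'M[C]_m) : Prop :=
  forall (k : nat) (X : 'M[C]_(k * n)), psdmx X -> psdmx (@ampliate n m k f X).

Definition is_instrument {Omega : finType} {n m : nat}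
  (I : Omega -> 'M[C]_n -> 'M[C]_m) : Prop :=
  [/\ forall x, is_linear (I x),
      forall x, completely_positive (I x),
      forall x (rho : 'M[C]_n), psdmx rho -> \tr (I x rho) <= \tr rho
    & forall rho : 'M[C]_n, \tr (\sum_x I x rho) = \tr rho].

Definition is_povm {Omega : finType} {n : nat} (A : Omega -> 'M[C]_n) : Prop :=
  (forall x, psdmx (A x)) /\ \sum_x A x = 1%:M.

(* induced POVM: the unique A with tr[A(x) rho] = tr[I_x(rho)] for all rho,
   namely A(x)_{ij} = tr[I_x(|j><i|)]. *)
Definition induced_povm {Omega : finType} {n m : nat}
  (I : Omega -> 'M[C]_n -> 'M[C]_m) (x : Omega) : 'M[C]_n :=
  \matrix_(i, j) \tr (I x (delta_mx j i)).

(* the positive square root of a positive operator (chosen classically; it is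
   the unique S with S positive and S S = A) *)
Definition psd_sqrt {n : nat} (A : 'M[C]_n) : 'M[C]_n :=
  epsilon (inhabits 0) (fun S : 'M[C]_n => psdmx S /\ S *m S = A).

Definition luders {Omega : finType} {n : nat} (A : Omega -> 'M[C]_n)
  (x : Omega) (rho : 'M[C]_n) : 'M[C]_n :=
  psd_sqrt (A x) *m rho *m psd_sqrt (A x).

Definition ptrace1 {m p : nat} (X : 'M[C]_(m * p)) : 'M[C]_p :=
  \matrix_(j, l) \sum_(i < m) X (mxtens_index (i, j)) (mxtens_index (i, l)).
Definition ptrace2 {m p : nat} (X : 'M[C]_(m * p)) : 'M[C]_m :=
  \matrix_(i, k) \sum_(j < p) X (mxtens_index (i, j)) (mxtens_index (k, j)).

Definition compatible_ins {Omega Lambda : finType} {n m p : nat}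
  (I : Omega -> 'M[C]_n -> 'M[C]_m) (J : Lambda -> 'M[C]_n -> 'M[C]_p) : Prop :=
  exists G : Omega * Lambda -> 'M[C]_n -> 'M[C]_(m * p),
    [/\ is_instrument G,
        forall (y : Lambda) (rho : 'M[C]_n), state rho ->
          \sum_(x : Omega) ptrace1 (G (x, y) rho) = J y rho
      & forall (x : Omega) (rho : 'M[C]_n), state rho ->
          \sum_(y : Lambda) ptrace2 (G (x, y) rho) = I x rho].

End Defs.

(* Main.v *)
Require Import Defs.
From HB Require Import structures.
From mathcomp Require Import all_boot all_order all_algebra.
From mathcomp Require Import mxtens spectral sesquilinear ring.
From Stdlib Require Import ClassicalEpsilon.
Set Implicit Arguments. Unset Strict Implicit. Unset Printing Implicit Defensive.
Import Order.TTheory GRing.Theory Num.Theory.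
Local Open Scope ring_scope.
Section Aux1.
Variable C : numClosedFieldType.

Lemma adjmxM r s t (A : 'M[C]_(r,s)) (B : 'M[C]_(s,t)) :
  adjmx (A *m B) = adjmx B *m adjmx A.
Proof. by rewrite /adjmx map_mxM trmx_mul. Qed.

Lemma adjmxK r s (A : 'M[C]_(r,s)) : adjmx (adjmx A) = A.
Proof. by apply/matrixP=> i j; rewrite !mxE conjCK. Qed.

Lemma adjmxD r s (A B : 'M[C]_(r,s)) : adjmx (A + B) = adjmx A + adjmx B.
Proof. by apply/matrixP=> i j; rewrite !mxE rmorphD. Qed.

Lemma adjmx0 r s : adjmx (0 : 'M[C]_(r,s)) = 0.
Proof. by apply/matrixP=> i j; rewrite !mxE rmorph0. Qed.

Lemma adjmxN r s (A : 'M[C]_(r,s)) : adjmx (- A) = - adjmx A.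
Proof. by apply/matrixP=> i j; rewrite !mxE rmorphN. Qed.

Lemma adjmxB r s (A B : 'M[C]_(r,s)) : adjmx (A - B) = adjmx A - adjmx B.
Proof. by rewrite adjmxD adjmxN. Qed.

Lemma adjmxZ r s a (A : 'M[C]_(r,s)) : adjmx (a *: A) = a^* *: adjmx A.
Proof. by apply/matrixP=> i j; rewrite !mxE rmorphM. Qed.

Lemma adjmx_sum r s (T : finType) (F : T -> 'M[C]_(r,s)) :
  adjmx (\sum_t F t) = \sum_t adjmx (F t).
Proof. exact: (big_morph _ (@adjmxD r s) (@adjmx0 r s)). Qed.

Lemma adjmx1 r : adjmx (1%:M : 'M[C]_r) = 1%:M.
Proof. by apply/matrixP=> i j; rewrite !mxE rmorph_nat eq_sym. Qed.

Lemma adjmx_delta r s (i : 'I_r) (j : 'I_s) :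
  adjmx (delta_mx i j : 'M[C]_(r,s)) = delta_mx j i.
Proof.
by apply/matrixP=> a b; rewrite !mxE rmorph_nat andbC.
Qed.

Lemma adjmxE r s (A : 'M[C]_(r,s)) i j : adjmx A i j = (A j i)^*.
Proof. by rewrite !mxE. Qed.

Lemma quadE n (v : 'cV[C]_n) (A : 'M[C]_n) :
  (adjmx v *m A *m v) 0 0 = \sum_i \sum_j (v i 0)^* * A i j * v j 0.
Proof.
rewrite mxE [RHS]exchange_big; apply: eq_bigr => j _; rewrite mxE mulr_suml.
by apply: eq_bigr => i _; rewrite !mxE.
Qed.

Lemma psd_congr k n (X : 'M[C]_k) (B : 'M[C]_(k,n)) :
  psdmx X -> psdmx (adjmx B *m X *m B).
Proof.
move=> hX v; have := hX (B *m v).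
by rewrite adjmxM !mulmxA.
Qed.

Lemma psd0 n : psdmx (0 : 'M[C]_n).
Proof. by move=> v; rewrite mulmx0 mul0mx mxE. Qed.

Lemma psdD n (X Y : 'M[C]_n) : psdmx X -> psdmx Y -> psdmx (X + Y).
Proof.
move=> hX hY v; rewrite mulmxDr mulmxDl mxE.
by apply: addr_ge0; [exact: hX | exact: hY].
Qed.

Lemma psd_sum n (T : finType) (F : T -> 'M[C]_n) :
  (forall t, psdmx (F t)) -> psdmx (\sum_t F t).
Proof.
move=> h; apply: (big_ind (@psdmx C n)); [exact: psd0 | exact: psdD | done].
Qed.

Lemma psd_diag n (d : 'rV[C]_n) : (forall i, 0 <= d 0 i) -> psdmx (diag_mx d).
Proof.
move=> hd v; rewrite quadE; apply: sumr_ge0 => i _.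
rewrite (bigD1 i) //= big1 ?addr0; last first.
  by move=> j /negPf ji; rewrite !mxE eq_sym ji mulr0n mulr0 mul0r.
rewrite !mxE eqxx mulr1n mulrC mulrA.
by apply: mulr_ge0 => //; exact: mul_conjC_ge0.
Qed.

Lemma psd1 n : psdmx (1%:M : 'M[C]_n).
Proof.
have -> : (1%:M : 'M[C]_n) = diag_mx (const_mx 1).
  by apply/matrixP=> i j; rewrite !mxE.
by apply: psd_diag => i; rewrite mxE ler01.
Qed.

End Aux1.
Section Aux2.
Variable C : numClosedFieldType.

Lemma mxE_add r s (X Y : 'M[C]_(r,s)) i j : (X + Y) i j = X i j + Y i j.
Proof. by rewrite mxE. Qed.
Lemma mxE_scale r s a (X : 'M[C]_(r,s)) i j : (a *: X) i j = a * X i j.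
Proof. by rewrite mxE. Qed.

Lemma quad_exp n (A : 'M[C]_n) (u w : 'cV[C]_n) c :
  (adjmx (u + c *: w) *m A *m (u + c *: w)) 0 0 =
  (adjmx u *m A *m u) 0 0 + c * (adjmx u *m A *m w) 0 0
  + c^* * (adjmx w *m A *m u) 0 0 + c^* * c * (adjmx w *m A *m w) 0 0.
Proof.
rewrite adjmxD adjmxZ !mulmxDl !mulmxDr -!scalemxAl -!scalemxAr !scalerA.
rewrite !mxE_add !mxE_scale; ring.
Qed.

Lemma delta_quad n (A : 'M[C]_n) i j :
  (adjmx (delta_mx i 0 : 'cV[C]_n) *m A *m (delta_mx j 0 : 'cV[C]_n)) 0 0 = A i j.
Proof.
rewrite adjmx_delta mxE (bigD1 j) //= big1 ?addr0.
  rewrite !mxE eqxx mulr1 (bigD1 i) //= big1 ?addr0.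
    by rewrite !mxE !eqxx mul1r.
  by move=> k /negPf ki; rewrite !mxE ki andbF mul0r.
by move=> k /negPf kj; rewrite !mxE kj mulr0.
Qed.

Lemma psd_real n (A : 'M[C]_n) (v : 'cV[C]_n) : psdmx A -> ((adjmx v *m A *m v) 0 0)^* = (adjmx v *m A *m v) 0 0.
Proof. by move=> hA; apply: conj_Creal; apply: ger0_real; apply: hA. Qed.

Lemma herm_alg (a b x y : C) : a^* = a -> b^* = b ->
 (a + 1 * x + 1^* * y + 1^* * 1 * b)^* = a + 1 * x + 1^* * y + 1^* * 1 * b ->
 (a + 'i * x + 'i^* * y + 'i^* * 'i * b)^* = a + 'i * x + 'i^* * y + 'i^* * 'i * b ->
 y^* = x.
Proof.
move=> ha hb h1 h2.
have E1 : (a + 1 * x + 1^* * y + 1^* * 1 * b)^* = a + x^* + y^* + b.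
  rewrite !rmorphD !rmorphM !rmorph1 /= ha hb; ring.
have E1' : a + 1 * x + 1^* * y + 1^* * 1 * b = a + x + y + b.
  by rewrite rmorph1; ring.
have ii : 'i^* * 'i = 1 :> C by rewrite conjCi mulNr -expr2 sqrCi opprK.
have E2 : (a + 'i * x + 'i^* * y + 'i^* * 'i * b)^* = a + 'i^* * x^* + 'i * y^* + b.
  by rewrite ii !rmorphD !rmorphM /= ha hb conjCK rmorph1; ring.
have E2' : a + 'i * x + 'i^* * y + 'i^* * 'i * b = a + 'i * x + 'i^* * y + b.
  by rewrite ii; ring.
rewrite E1 E1' in h1; rewrite E2 E2' in h2.
have f1 : x^* + y^* = x + y.
  have := congr1 (fun z => z - a - b) h1; move=> /= h; rewrite -[LHS]/(_) .
  by transitivity (a + x^* + y^* + b - a - b); [ring | rewrite h; ring].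
have f2 : 'i * (y^* - x) = 'i * (x^* - y).
  rewrite conjCi in h2.
  transitivity (a + - 'i * x^* + 'i * y^* + b - a - b - 'i * x + 'i * x^*); first ring.
  by rewrite h2; ring.
have f3 : y^* - x = x^* - y by apply: (mulfI (neq0Ci C)).
have n2 : (2%:R : C) != 0 by rewrite pnatr_eq0.
suff h : x^* = y by rewrite -h conjCK.
apply: (mulIf n2).
transitivity (((x^* + y^*) + (x^* - y) - (y^* - x)) + y - x); first ring.
by rewrite f1 f3; ring.
Qed.

Lemma psd_herm n (A : 'M[C]_n) : psdmx A -> adjmx A = A.
Proof.
move=> hA; apply/matrixP=> i j; rewrite adjmxE.
set ei := (delta_mx i 0 : 'cV[C]_n); set ej := (delta_mx j 0 : 'cV[C]_n).
have q1 := psd_real (ei + 1 *: ej) hA.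
have q2 := psd_real (ei + 'i *: ej) hA.
rewrite quad_exp !delta_quad in q1; rewrite quad_exp !delta_quad in q2.
have hi : (A i i)^* = A i i by have := psd_real ei hA; rewrite delta_quad.
have hj : (A j j)^* = A j j by have := psd_real ej hA; rewrite delta_quad.
exact: (herm_alg hi hj q1 q2).
Qed.
End Aux2.
Section Aux3.
Variable C : numClosedFieldType.

Lemma tstar_adj r s (A : 'M[C]_(r,s)) : (A ^t* )%sesqui = adjmx A.
Proof. by rewrite /adjmx map_trmx. Qed.

Lemma psd_spectral n (A : 'M[C]_n) : psdmx A -> exists (U : 'M[C]_n) (d : 'rV[C]_n),
  [/\ U *m adjmx U = 1%:M, adjmx U *m U = 1%:M, (forall i, 0 <= d 0 i)
    & A = adjmx U *m diag_mx d *m U].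
Proof.
move=> hA; have hH := psd_herm hA.
have nA : A \is normalmx by apply/normalmxP; rewrite tstar_adj hH.
have := orthomx_spectralP nA.
set U := spectralmx A; set d := spectral_diag A => eA.
have uU : U \is unitarymx by apply: spectral_unitarymx.
have e1 : U *m adjmx U = 1%:M by rewrite -tstar_adj; apply/unitarymxP.
have iU : invmx U = adjmx U by rewrite invmx_unitary // tstar_adj.
have e2 : adjmx U *m U = 1%:M by rewrite -iU mulVmx // spectral_unit.
rewrite iU in eA.
exists U, d; split => // i.
have := hA (adjmx U *m delta_mx i 0).
rewrite adjmxM adjmxK eA !mulmxA -(mulmxA _ U (adjmx U)) e1 mulmx1.
rewrite -[_ *m U *m adjmx U]mulmxA e1 mulmx1.
by rewrite delta_quad mxE eqxx mulr1n.
Qed.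

End Aux3.
Section Aux4.
Variable C : numClosedFieldType.

Lemma adjdiag n (d : 'rV[C]_n) : adjmx (diag_mx d) = diag_mx (\row_i (d 0 i)^*).
Proof.
apply/matrixP=> i j; rewrite !mxE rmorphMn eq_sym.
by case: eqVneq => [->|] //=; rewrite !mulr0n.
Qed.

Lemma conjU_mul n (U X Y : 'M[C]_n) : U *m adjmx U = 1%:M ->
  (adjmx U *m X *m U) *m (adjmx U *m Y *m U) = adjmx U *m (X *m Y) *m U.
Proof.
move=> e1; rewrite !mulmxA -[_ *m U *m adjmx U]mulmxA e1 mulmx1.
by rewrite ?mulmxA.
Qed.

Lemma adj_conjU n (U X : 'M[C]_n) : adjmx (adjmx U *m X *m U) = adjmx U *m adjmx X *m U.
Proof. by rewrite !adjmxM adjmxK mulmxA. Qed.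

Lemma psd_sqrt_ex n (A : 'M[C]_n) : psdmx A -> exists S, psdmx S /\ S *m S = A.
Proof.
move=> /psd_spectral [U [d [e1 e2 hd ->]]].
exists (adjmx U *m diag_mx (\row_i sqrtC (d 0 i)) *m U); split.
  by apply: psd_congr; apply: psd_diag => i; rewrite mxE sqrtC_ge0.
rewrite conjU_mul // mulmx_diag; congr (_ *m diag_mx _ *m _).
by apply/rowP=> i; rewrite !mxE -expr2 sqrtCK.
Qed.

Lemma psd_sqrt_spec n (A : 'M[C]_n) : psdmx A ->
  psdmx (psd_sqrt A) /\ psd_sqrt A *m psd_sqrt A = A.
Proof.
move=> hA; rewrite /psd_sqrt.
exact: (epsilon_spec (inhabits (0:'M[C]_n)) (fun S : 'M[C]_n => psdmx S /\ S *m S = A) (psd_sqrt_ex hA)).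
Qed.

Lemma pinv_ex n (S : 'M[C]_n) : psdmx S -> exists R P : 'M[C]_n,
  adjmx R = R /\ adjmx P = P /\ P *m P = P /\ R *m S = P /\ S *m R = P
  /\ S *m P = S /\ P *m S = S.
Proof.
move=> /psd_spectral [U [d [e1 e2 hd ->]]].
have hr i : (d 0 i)^* = d 0 i by apply: conj_Creal; apply: ger0_real.
exists (adjmx U *m diag_mx (\row_i (d 0 i)^-1) *m U).
exists (adjmx U *m diag_mx (\row_i (d 0 i * (d 0 i)^-1)) *m U).
rewrite !adj_conjU !adjdiag !conjU_mul // !mulmx_diag.
split; [|split; [|split; [|split; [|split; [|split]]]]];
  congr (_ *m diag_mx _ *m _); apply/rowP=> i; rewrite !mxE ?rmorphM ?fmorphV /= ?hr //;
  by case: (eqVneq (d 0 i) 0) => [->|nz]; rewrite ?invr0 ?mulr0 ?mul0r // ?mulfV ?mulVf ?mulr1 ?mul1r.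
Qed.

End Aux4.
Section Aux5.
Variable C : numClosedFieldType.

Lemma sum_pair (V : zmodType) k n (F : 'I_(k * n) -> V) :
  \sum_(p < k * n) F p = \sum_(a < k) \sum_(e < n) F (mxtens_index (a, e)).
Proof.
rewrite pair_big /=.
rewrite (reindex (@mxtens_unindex k n)) /=; last first.
  by exists (@mxtens_index k n) => x _; rewrite (mxtens_indexK, mxtens_unindexK).
by apply: eq_bigr => p _; exact: (congr1 F (esym (mxtens_unindexK p))).
Qed.

Lemma mxtens_index_eq k n (a a' : 'I_k) (e e' : 'I_n) :
  (mxtens_index (a, e) == mxtens_index (a', e')) = (a == a') && (e == e').
Proof. by rewrite (can_eq (@mxtens_indexK k n)) xpair_eqE. Qed.

Lemma delta_tens k k' n n' (a : 'I_k) (c : 'I_k') (e : 'I_n) (f : 'I_n') :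
  (delta_mx (mxtens_index (a, e)) (mxtens_index (c, f)) : 'M[C]_(k * n, k' * n'))
  = delta_mx a c *t delta_mx e f.
Proof.
apply/matrixP=> i j; case: (mxtens_indexP i) => a' e'; case: (mxtens_indexP j) => c' f'.
rewrite tensmxE !mxE !mxtens_index_eq.
by case: (a' == a); case: (e' == e); case: (c' == c); case: (f' == f);
  rewrite /= ?mulr1 ?mulr0 ?mul0r.
Qed.

Lemma tens_basis k k' n n' (X : 'M[C]_(k * n, k' * n')) :
  X = \sum_a \sum_c \sum_e \sum_f
    X (mxtens_index (a, e)) (mxtens_index (c, f)) *: (delta_mx a c *t delta_mx e f).
Proof.
rewrite {1}(matrix_sum_delta X) sum_pair.
apply: eq_bigr => a _; rewrite exchange_big sum_pair; apply: eq_bigr => c _.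
rewrite exchange_big; apply: eq_bigr => e _; apply: eq_bigr => f _.
by rewrite delta_tens.
Qed.

Lemma lin0 n m (f : 'M[C]_n -> 'M[C]_m) : is_linear f -> f 0 = 0.
Proof.
move=> hf; have := hf 1 0 0; rewrite !scale1r addr0 => h.
by apply: (addrI (f 0)); rewrite addr0; exact: esym h.
Qed.

Lemma linD n m (f : 'M[C]_n -> 'M[C]_m) : is_linear f -> forall X Y, f (X + Y) = f X + f Y.
Proof. by move=> hf X Y; have := hf 1 X Y; rewrite !scale1r. Qed.

Lemma linZ n m (f : 'M[C]_n -> 'M[C]_m) : is_linear f -> forall a X, f (a *: X) = a *: f X.
Proof. by move=> hf a X; have := hf a X 0; rewrite !addr0 lin0 // addr0. Qed.

Lemma lin_sum n m (f : 'M[C]_n -> 'M[C]_m) (T : Type) (r : seq T) (P : pred T) (F : T -> 'M[C]_n) :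
  is_linear f -> f (\sum_(t <- r | P t) F t) = \sum_(t <- r | P t) f (F t).
Proof. by move=> hf; apply: (big_morph f (linD hf) (lin0 hf)). Qed.

Lemma lin_ext k n q (f g : 'M[C]_(k * n) -> 'M[C]_q) : is_linear f -> is_linear g ->
  (forall (A : 'M[C]_k) (B : 'M[C]_n), f (A *t B) = g (A *t B)) -> f =1 g.
Proof.
move=> hf hg h X; rewrite (tens_basis X) !lin_sum //.
apply: eq_bigr => a _; rewrite !lin_sum //; apply: eq_bigr => c _.
rewrite !lin_sum //; apply: eq_bigr => e _; rewrite !lin_sum //; apply: eq_bigr => f' _.
by rewrite !linZ // h.
Qed.

Lemma lin_comp n m q (f : 'M[C]_m -> 'M[C]_q) (g : 'M[C]_n -> 'M[C]_m) :
  is_linear f -> is_linear g -> is_linear (f \o g).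
Proof. by move=> hf hg a X Y /=; rewrite hg hf. Qed.

Definition kraus (T : finType) m n (K : T -> 'M[C]_(m, n)) (X : 'M[C]_n) : 'M[C]_m :=
  \sum_t K t *m X *m adjmx (K t).

Lemma kraus_lin (T : finType) m n (K : T -> 'M[C]_(m, n)) : is_linear (kraus K).
Proof.
move=> a X Y; rewrite /kraus scaler_sumr -big_split /=; apply: eq_bigr => t _.
by rewrite mulmxDr mulmxDl -scalemxAr -scalemxAl.
Qed.

Lemma adj_tens m n p q (A : 'M[C]_(m, n)) (B : 'M[C]_(p, q)) :
  adjmx (A *t B) = adjmx A *t adjmx B.
Proof. by apply/matrixP=> i j; rewrite !mxE rmorphM. Qed.

Lemma tensmxDr m n p q (A : 'M[C]_(m, n)) (B B' : 'M[C]_(p, q)) :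
  A *t (B + B') = A *t B + A *t B'.
Proof. by apply/matrixP=> i j; rewrite !mxE mulrDr. Qed.

Lemma tensmxDl m n p q (A A' : 'M[C]_(m, n)) (B : 'M[C]_(p, q)) :
  (A + A') *t B = A *t B + A' *t B.
Proof. by apply/matrixP=> i j; rewrite !mxE mulrDl. Qed.

Lemma tensmx_sumr m n p q (A : 'M[C]_(m, n)) (T : finType) (F : T -> 'M[C]_(p, q)) :
  A *t (\sum_t F t) = \sum_t A *t F t.
Proof. exact: (big_morph _ (tensmxDr A) (@tensmx0 _ _ _ p q A)). Qed.

Lemma tensmx_suml m n p q (B : 'M[C]_(p, q)) (T : finType) (F : T -> 'M[C]_(m, n)) :
  (\sum_t F t) *t B = \sum_t F t *t B.
Proof. exact: (big_morph (fun A => A *t B) (fun A A' => tensmxDl A A' B) (@tens0mx _ m n _ _ B)). Qed.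

Lemma block_lin k n (a c : 'I_k) (x : C) (X Y : 'M[C]_(k * n)) :
  mxblock_of (x *: X + Y) a c = x *: mxblock_of X a c + mxblock_of Y a c.
Proof. by apply/matrixP=> i j; rewrite !mxE. Qed.

Lemma ampliate_lin k n m (f : 'M[C]_n -> 'M[C]_m) : is_linear f -> is_linear (ampliate (k:=k) f).
Proof. by move=> hf x X Y; apply/matrixP=> i j; rewrite !mxE block_lin hf !mxE. Qed.

Lemma block_tens k n (A : 'M[C]_k) (B : 'M[C]_n) a c : mxblock_of (A *t B) a c = A a c *: B.
Proof. by apply/matrixP=> i j; rewrite !mxE !mxtens_indexK. Qed.

Lemma ampliate_tens k n m (f : 'M[C]_n -> 'M[C]_m) (A : 'M[C]_k) (B : 'M[C]_n) :
  is_linear f -> ampliate (k:=k) f (A *t B) = A *t f B.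
Proof. by move=> hf; apply/matrixP=> i j; rewrite !mxE block_tens linZ // mxE. Qed.

Lemma block_ampliate k n m (f : 'M[C]_n -> 'M[C]_m) (X : 'M[C]_(k * n)) a c :
  mxblock_of (ampliate (k:=k) f X) a c = f (mxblock_of X a c).
Proof. by apply/matrixP=> i j; rewrite !mxE !mxtens_indexK. Qed.

Lemma ampliate_comp k n m q (f : 'M[C]_m -> 'M[C]_q) (g : 'M[C]_n -> 'M[C]_m) X :
  ampliate (k:=k) (f \o g) X = ampliate (k:=k) f (ampliate (k:=k) g X).
Proof. by apply/matrixP=> i j; rewrite !mxE block_ampliate. Qed.

Lemma cp_comp n m q (f : 'M[C]_m -> 'M[C]_q) (g : 'M[C]_n -> 'M[C]_m) :
  completely_positive f -> completely_positive g -> completely_positive (f \o g).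
Proof. by move=> hf hg k X hX; rewrite ampliate_comp; apply: hf; apply: hg. Qed.

Lemma ampliate_kraus k (T : finType) m n (K : T -> 'M[C]_(m, n)) (X : 'M[C]_(k * n)) :
  ampliate (k:=k) (kraus K) X = kraus (fun t => (1%:M : 'M[C]_k) *t K t) X.
Proof.
apply: (lin_ext (@ampliate_lin k _ _ _ (kraus_lin K)) (kraus_lin _)) => A B.
rewrite ampliate_tens; last exact: kraus_lin.
rewrite /kraus (tensmx_sumr A); apply: eq_bigr => t _.
by rewrite adj_tens adjmx1 !tensmx_mul mul1mx mulmx1.
Qed.

Lemma kraus_cp (T : finType) m n (K : T -> 'M[C]_(m, n)) : completely_positive (kraus K).
Proof.
move=> k X hX; rewrite ampliate_kraus /kraus; apply: psd_sum => t.
by rewrite -{1}[_ *t K t]adjmxK; apply: psd_congr.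
Qed.

End Aux5.
Section Aux6.
Variable C : numClosedFieldType.

Lemma entry3 r s t u (A : 'M[C]_(r, s)) (X : 'M[C]_(s, t)) (B : 'M[C]_(t, u)) i j :
  (A *m X *m B) i j = \sum_a \sum_c A i a * X a c * B c j.
Proof.
rewrite mxE exchange_big; apply: eq_bigr => c _; rewrite mxE mulr_suml.
by apply: eq_bigr => a _.
Qed.

Lemma lin_expand n m (f : 'M[C]_n -> 'M[C]_m) X : is_linear f ->
  f X = \sum_a \sum_c X a c *: f (delta_mx a c).
Proof.
move=> hf; rewrite {1}(matrix_sum_delta X) lin_sum //; apply: eq_bigr => a _.
by rewrite lin_sum //; apply: eq_bigr => c _; rewrite linZ.
Qed.

Lemma spec_entry n (U : 'M[C]_n) (d : 'rV[C]_n) p q :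
  (adjmx U *m diag_mx d *m U) p q = \sum_r (U r p)^* * d 0 r * U r q.
Proof. by rewrite mul_mx_diag mxE; apply: eq_bigr => r _; rewrite !mxE. Qed.

Lemma choi n m (f : 'M[C]_n -> 'M[C]_m) : is_linear f -> completely_positive f ->
  exists K : 'I_(n * m) -> 'M[C]_(m, n), forall X, f X = kraus K X.
Proof.
move=> hf hcp.
pose psi : 'cV[C]_(n * n) :=
  \col_i (((mxtens_unindex i).1 == (mxtens_unindex i).2)%:R).
pose Om := psi *m adjmx psi.
have hOm : psdmx Om.
  have -> : Om = adjmx (adjmx psi) *m 1%:M *m adjmx psi by rewrite adjmxK mulmx1.
  by apply: psd_congr; apply: psd1.
have bOm a c : mxblock_of Om a c = delta_mx a c.
  apply/matrixP=> b d; rewrite !mxE big_ord1 !mxE !mxtens_indexK /=.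
  rewrite rmorph_nat -natrM; congr (_ %:R).
  by rewrite [b == a]eq_sym [d == c]eq_sym; case: (a == b); case: (c == d).
have hCh := hcp n Om hOm.
set Ch := ampliate f Om in hCh.
have eCh a c i j : Ch (mxtens_index (a, i)) (mxtens_index (c, j)) = f (delta_mx a c) i j.
  by rewrite /Ch /ampliate mxE !mxtens_indexK /= bOm.
have [U [d [e1 e2 hd eU]]] := psd_spectral hCh.
have hr r : (sqrtC (d 0 r))^* = sqrtC (d 0 r).
  by apply: conj_Creal; apply: sqrtC_real.
exists (fun r => \matrix_(i < m, a < n) ((U r (mxtens_index (a, i)))^* * sqrtC (d 0 r))).
move=> X; apply/matrixP=> i j.
rewrite (lin_expand X hf) /kraus !summxE.
under eq_bigr do rewrite summxE.
under [RHS]eq_bigr do rewrite entry3.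
rewrite [RHS]exchange_big; apply: eq_bigr => a _.
rewrite [RHS]exchange_big; apply: eq_bigr => c _.
rewrite mxE -eCh eU spec_entry mulr_sumr; apply: eq_bigr => r _.
rewrite !mxE rmorphM /= conjCK hr.
transitivity (X a c * ((U r (mxtens_index (a, i)))^* * (sqrtC (d 0 r) ^+ 2) * U r (mxtens_index (c, j)))).
  by rewrite sqrtCK mulrA.
by rewrite expr2; ring.
Qed.

End Aux6.
Section Aux7.
Variable C : numClosedFieldType.

Lemma tr_sum n (T : finType) (F : T -> 'M[C]_n) : \tr (\sum_t F t) = \sum_t \tr (F t).
Proof. exact: (big_morph _ (@mxtraceD _ _) (mxtrace0 _ _)). Qed.

Lemma ptrace2_lin m p : is_linear (@ptrace2 C m p).
Proof.
move=> a X Y; apply/matrixP=> i k; rewrite !mxE mulr_sumr -big_split /=.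
by apply: eq_bigr => j _; rewrite !mxE.
Qed.

Lemma ptrace1_lin m p : is_linear (@ptrace1 C m p).
Proof.
move=> a X Y; apply/matrixP=> i k; rewrite !mxE mulr_sumr -big_split /=.
by apply: eq_bigr => j _; rewrite !mxE.
Qed.

Lemma ptrace1_sum m p (T : finType) (G : T -> 'M[C]_(m * p)) :
  ptrace1 (\sum_t G t) = \sum_t ptrace1 (G t).
Proof. exact: lin_sum (@ptrace1_lin m p). Qed.

Lemma ptrace2_sum m p (T : finType) (G : T -> 'M[C]_(m * p)) :
  ptrace2 (\sum_t G t) = \sum_t ptrace2 (G t).
Proof. exact: lin_sum (@ptrace2_lin m p). Qed.

Lemma ptrace2_tens m p (A : 'M[C]_m) (B : 'M[C]_p) : ptrace2 (A *t B) = \tr B *: A.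
Proof.
apply/matrixP=> i k; rewrite !mxE mulr_suml; apply: eq_bigr => j _.
by rewrite tensmxE mulrC.
Qed.

Lemma ptrace1_tens m p (A : 'M[C]_m) (B : 'M[C]_p) : ptrace1 (A *t B) = \tr A *: B.
Proof.
apply/matrixP=> i k; rewrite !mxE mulr_suml; apply: eq_bigr => j _.
by rewrite tensmxE.
Qed.

Lemma tr_ptrace2 m p (Z : 'M[C]_(m * p)) : \tr (ptrace2 Z) = \tr Z.
Proof. by rewrite /mxtrace sum_pair; apply: eq_bigr => a _; rewrite mxE. Qed.

Lemma kraus_tr (T : finType) m n (K : T -> 'M[C]_(m, n)) X :
  \sum_t adjmx (K t) *m K t = 1%:M -> \tr (kraus K X) = \tr X.
Proof.
move=> h; rewrite /kraus tr_sum.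
under eq_bigr do rewrite mxtrace_mulC mulmxA.
by rewrite -tr_sum -mulmx_suml h mul1mx.
Qed.

Lemma kraus_tens_mul (T T' : finType) m n p q (F : T -> 'M[C]_(m, n)) (L : T' -> 'M[C]_(p, q))
  (A : 'M[C]_n) (B : 'M[C]_q) :
  kraus (fun ts : T * T' => F ts.1 *t L ts.2) (A *t B) =
  \sum_t \sum_s (F t *m A *m adjmx (F t)) *t (L s *m B *m adjmx (L s)).
Proof.
rewrite /kraus pair_bigA /=; apply: eq_bigr => -[t s] _ /=.
by rewrite adj_tens !tensmx_mul.
Qed.

Lemma ptrace2_kraus (T T' : finType) m n p q (F : T -> 'M[C]_(m, n)) (L : T' -> 'M[C]_(p, q)) :
  \sum_s adjmx (L s) *m L s = 1%:M -> forall Z,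
  ptrace2 (kraus (fun ts : T * T' => F ts.1 *t L ts.2) Z) = kraus F (ptrace2 Z).
Proof.
move=> hL; apply: (lin_ext (lin_comp (@ptrace2_lin m p) (kraus_lin _))
                           (lin_comp (kraus_lin F) (@ptrace2_lin n q))) => A B /=.
rewrite kraus_tens_mul lin_sum; last exact: ptrace2_lin.
rewrite ptrace2_tens linZ; last exact: kraus_lin.
rewrite /kraus scaler_sumr; apply: eq_bigr => t _.
rewrite lin_sum; last exact: ptrace2_lin.
under eq_bigr do rewrite ptrace2_tens.
rewrite -scaler_suml; congr (_ *: _).
by rewrite -tr_sum; exact: (kraus_tr B hL).
Qed.

Lemma ptrace1_kraus (T T' : finType) m n p q (F : T -> 'M[C]_(m, n)) (L : T' -> 'M[C]_(p, q)) :
  \sum_t adjmx (F t) *m F t = 1%:M -> forall Z,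
  ptrace1 (kraus (fun ts : T * T' => F ts.1 *t L ts.2) Z) = kraus L (ptrace1 Z).
Proof.
move=> hF; apply: (lin_ext (lin_comp (@ptrace1_lin m p) (kraus_lin _))
                           (lin_comp (kraus_lin L) (@ptrace1_lin n q))) => A B /=.
rewrite kraus_tens_mul lin_sum; last exact: ptrace1_lin.
rewrite ptrace1_tens linZ; last exact: kraus_lin.
under eq_bigr do rewrite ptrace1_sum.
under eq_bigr do under eq_bigr do rewrite ptrace1_tens.
rewrite exchange_big /kraus scaler_sumr; apply: eq_bigr => s _.
rewrite -scaler_suml; congr (_ *: _).
by rewrite -tr_sum; exact: (kraus_tr A hF).
Qed.

End Aux7.
Section Aux8.
Variable C : numClosedFieldType.

Lemma trace_delta n (M : 'M[C]_n) i j : \tr (M *m delta_mx j i) = M i j.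
Proof.
rewrite mxtrace_mulC /mxtrace (bigD1 j) //= big1 ?addr0.
  rewrite mxE (bigD1 i) //= big1 ?addr0.
    by rewrite !mxE !eqxx mul1r.
  by move=> l /negPf li; rewrite !mxE li andbF mul0r.
move=> k /negPf kj; rewrite mxE big1 // => l _.
by rewrite !mxE kj mul0r.
Qed.

Lemma induced_kraus (Om : finType) (T : finType) m n (I : Om -> 'M[C]_n -> 'M[C]_m)
  x (K : T -> 'M[C]_(m, n)) :
  (forall X, I x X = kraus K X) -> induced_povm I x = \sum_t adjmx (K t) *m K t.
Proof.
move=> hK; apply/matrixP=> i j; rewrite !mxE hK /kraus tr_sum summxE.
apply: eq_bigr => t _; rewrite mxtrace_mulC mulmxA.
by rewrite trace_delta.
Qed.

Lemma povm_sum (Om : finType) m n (I : Om -> 'M[C]_n -> 'M[C]_m) :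
  is_instrument I -> \sum_x induced_povm I x = 1%:M.
Proof.
case=> _ _ _ htp; apply/matrixP=> i j; rewrite summxE.
under eq_bigr do rewrite mxE.
rewrite -tr_sum htp -[delta_mx j i]mul1mx trace_delta.
by [].
Qed.

Lemma sum_sq_eq0 (T : finType) m n (M : T -> 'M[C]_(m, n)) :
  \sum_t adjmx (M t) *m M t = 0 -> forall t, M t = 0.
Proof.
move=> h.
have hterm (x : C) : 0 <= x^* * x by rewrite mulrC mul_conjC_ge0.
have htr t : \tr (adjmx (M t) *m M t) = \sum_a \sum_b (M t b a)^* * M t b a.
  by apply: eq_bigr => a _; rewrite mxE; apply: eq_bigr => b _; rewrite !mxE.
have hin t a : 0 <= \sum_b (M t b a)^* * M t b a by apply: sumr_ge0 => b _.
have hge t : 0 <= \tr (adjmx (M t) *m M t).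
  by rewrite htr; apply: sumr_ge0 => a _.
have h0 : \sum_t \tr (adjmx (M t) *m M t) = 0 by rewrite -tr_sum h mxtrace0.
move=> t; have := psumr_eq0P (fun t _ => hge t) h0 (i := t) isT.
rewrite htr => h1; apply/matrixP=> b a; rewrite mxE.
have h2 := psumr_eq0P (fun a _ => hin t a) h1 (i := a) isT.
have := psumr_eq0P (fun b _ => hterm (M t b a)) h2 (i := b) isT.
by move/eqP; rewrite mulf_eq0 conjC_eq0 orbb => /eqP.
Qed.

Lemma sum_delta_sq n k : \sum_(i < n) (delta_mx i 0 : 'M[C]_(n, k.+1)) *m delta_mx 0 i = 1%:M.
Proof. by rewrite mx1_sum_delta; apply: eq_bigr => i _; rewrite mul_delta_mx. Qed.

Lemma phi_ex (T : finType) m n (K : T -> 'M[C]_(m, n)) (S : 'M[C]_n) :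
  psdmx S -> S *m S = \sum_t adjmx (K t) *m K t -> (m = 0 -> n = 0)%N ->
  exists (T' : finType) (F : T' -> 'M[C]_(m, n)),
    \sum_t adjmx (F t) *m F t = 1%:M /\ forall X, kraus F (S *m X *m S) = kraus K X.
Proof.
move=> hS hSS hmn.
have [R [P [hR [hP [hPP [hRS [hSR [hSP hPS]]]]]]]] := pinv_ex hS.
have hSQ : S *m (1%:M - P) = 0 by rewrite mulmxBr mulmx1 hSP subrr.
have hQS : (1%:M - P) *m S = 0 by rewrite mulmxBl mul1mx hPS subrr.
have hQ : adjmx (1%:M - P) = 1%:M - P by rewrite adjmxB adjmx1 hP.
have KQ : forall t, K t *m (1%:M - P) = 0.
  apply: sum_sq_eq0.
  under eq_bigr do rewrite adjmxM -mulmxA [adjmx (K _) *m _]mulmxA.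
  rewrite -mulmx_sumr -mulmx_suml -hSS hQ.
  by rewrite -mulmxA hSQ !mulmx0.
have KP t : K t *m P = K t.
  by apply/esym/eqP; rewrite -subr_eq0 -[X in X - _]mulmx1 -mulmxBr KQ.
have PK t : P *m adjmx (K t) = adjmx (K t) by rewrite -hP -adjmxM KP.
have QQ : (1%:M - P) *m (1%:M - P) = 1%:M - P.
  by rewrite mulmxBl mulmxBr !mul1mx mulmxBr mulmx1 hPP subrr subr0.
destruct m as [|m'].
  have n0 := hmn erefl; subst n.
  exists T, K; split; first by apply/matrixP => i; case: i.
  by move=> X; apply/matrixP => i; case: i.
exists (T + 'I_n)%type.
exists (fun u => match u with inl t => K t *m R | inr i => (delta_mx 0 i : 'M[C]_(m'.+1, n)) *m (1%:M - P) end).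
split.
  rewrite big_sumType /=.
  have -> : \sum_t adjmx (K t *m R) *m (K t *m R) = adjmx R *m (\sum_t adjmx (K t) *m K t) *m R.
    by rewrite mulmx_sumr mulmx_suml; apply: eq_bigr => t _; rewrite adjmxM !mulmxA.
  have -> : \sum_i adjmx ((delta_mx 0 i : 'M[C]_(m'.+1, n)) *m (1%:M - P)) *m ((delta_mx 0 i : 'M[C]_(m'.+1, n)) *m (1%:M - P))
      = adjmx (1%:M - P) *m (\sum_(i < n) (delta_mx i 0 : 'M[C]_(n, m'.+1)) *m delta_mx 0 i) *m (1%:M - P).
    rewrite mulmx_sumr mulmx_suml; apply: eq_bigr => i _.
    by rewrite adjmxM adjmx_delta !mulmxA.
  rewrite sum_delta_sq mulmx1 hQ QQ -hSS hR.
  rewrite !mulmxA -[R *m S *m S *m R]mulmxA hSR -[R *m S *m P]mulmxA hSP hRS.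
  by rewrite addrC subrK.
move=> X; rewrite /kraus big_sumType /= [X in _ + X]big1 ?addr0; last first.
  by move=> i _; rewrite !mulmxA -[delta_mx 0 i *m _ *m S]mulmxA hQS mulmx0 !mul0mx.
apply: eq_bigr => t _; rewrite adjmxM hR !mulmxA.
rewrite -[K t *m R *m S]mulmxA hRS KP.
rewrite -[K t *m X *m S *m R]mulmxA hSR.
by rewrite -[_ *m P *m adjmx (K t)]mulmxA PK.
Qed.

End Aux8.
Section Aux9.
Variable C : numClosedFieldType.

Lemma inst_dim (Om : finType) n m (I : Om -> 'M[C]_n -> 'M[C]_m) :
  is_instrument I -> (m = 0)%N -> n = 0%N.
Proof.
move=> [_ _ _ htp] m0; subst m; have := htp 1%:M.
rewrite mxtrace1 /mxtrace big_ord0 => /eqP; rewrite eq_sym pnatr_eq0 => /eqP.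
by [].
Qed.

Lemma kraus_psd_sum (T : finType) m n (K : T -> 'M[C]_(m, n)) :
  psdmx (\sum_t adjmx (K t) *m K t).
Proof.
apply: psd_sum => t.
have -> : adjmx (K t) *m K t = adjmx (K t) *m 1%:M *m K t by rewrite mulmx1.
by apply: psd_congr; apply: psd1.
Qed.

Lemma phi_inst (Om : finType) n m (I : Om -> 'M[C]_n -> 'M[C]_m) :
  is_instrument I -> exists Phi : Om -> {T' : finType & T' -> 'M[C]_(m, n)},
  forall x, \sum_t adjmx (projT2 (Phi x) t) *m projT2 (Phi x) t = 1%:M /\
   forall X, kraus (projT2 (Phi x)) (luders (induced_povm I) x X) = I x X.
Proof.
move=> hI.
apply: (ClassicalEpsilon.choice (fun x (b : {T' : finType & T' -> 'M[C]_(m, n)}) =>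
  \sum_t adjmx (projT2 b t) *m projT2 b t = 1%:M /\
   forall X, kraus (projT2 b) (luders (induced_povm I) x X) = I x X)) => x.
have [hlin hcp _ _] := hI.
have [K hK] := choi (hlin x) (hcp x).
have hA := induced_kraus hK.
have hApsd : psdmx (induced_povm I x) by rewrite hA; apply: kraus_psd_sum.
have [hS hSS] := psd_sqrt_spec hApsd.
have hSS2 : psd_sqrt (induced_povm I x) *m psd_sqrt (induced_povm I x) = \sum_t adjmx (K t) *m K t by rewrite -hA.
have [T' [F [hF1 hF2]]] := phi_ex hS hSS2 (inst_dim hI).
exists (existT _ T' F); split => //= X.
by rewrite /luders hF2 hK.
Qed.

Lemma tr_tens_kraus (T T' : finType) m n p q (F : T -> 'M[C]_(m, n)) (L : T' -> 'M[C]_(p, q)) Z :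
  \sum_t adjmx (F t) *m F t = 1%:M -> \sum_s adjmx (L s) *m L s = 1%:M ->
  \tr (kraus (fun ts : T * T' => F ts.1 *t L ts.2) Z) = \tr Z.
Proof.
move=> hF hL; rewrite -tr_ptrace2 ptrace2_kraus // kraus_tr //.
exact: tr_ptrace2.
Qed.

End Aux9.

Theorem proposition2 (C : numClosedFieldType) (Omega Lambda : finType)
  (n m p : nat) (I : Omega -> 'M[C]_n -> 'M[C]_m)
  (J : Lambda -> 'M[C]_n -> 'M[C]_p) :
  is_instrument I -> is_instrument J ->
  compatible_ins (luders (induced_povm I)) (luders (induced_povm J)) ->
  compatible_ins I J.
Proof.
move=> hI hJ [G0 [hG0 hmJ hmI]].
have [Phi hPhi] := phi_inst hI.
have [Psi hPsi] := phi_inst hJ.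
have [G0lin G0cp G0tr G0tp] := hG0.
exists (fun xy rho => kraus (fun ts : projT1 (Phi xy.1) * projT1 (Psi xy.2) =>
          projT2 (Phi xy.1) ts.1 *t projT2 (Psi xy.2) ts.2) (G0 xy rho)).
split.
- split.
  + by move=> xy; apply: lin_comp; [apply: kraus_lin | apply: G0lin].
  + by move=> xy; apply: cp_comp; [apply: kraus_cp | apply: G0cp].
  + move=> xy rho hrho; rewrite tr_tens_kraus; first exact: G0tr.
      by case: (hPhi xy.1).
    by case: (hPsi xy.2).
  + move=> rho; rewrite tr_sum -G0tp tr_sum; apply: eq_bigr => xy _.
    rewrite tr_tens_kraus //; first by case: (hPhi xy.1).
    by case: (hPsi xy.2).
- move=> y rho hrho /=.
  have [hPs1 hPs2] := hPsi y.
  transitivity (\sum_x kraus (projT2 (Psi y)) (ptrace1 (G0 (x, y) rho))).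
    apply: eq_bigr => x _; apply: ptrace1_kraus.
    by case: (hPhi x).
  rewrite -(lin_sum (index_enum Omega) xpredT (fun x => ptrace1 (G0 (x, y) rho))
              (kraus_lin (projT2 (Psi y)))).
  by rewrite hmJ.
- move=> x rho hrho /=.
  have [hPh1 hPh2] := hPhi x.
  transitivity (\sum_y kraus (projT2 (Phi x)) (ptrace2 (G0 (x, y) rho))).
    apply: eq_bigr => y _; apply: ptrace2_kraus.
    by case: (hPsi y).
  rewrite -(lin_sum (index_enum Lambda) xpredT (fun y => ptrace2 (G0 (x, y) rho))
              (kraus_lin (projT2 (Phi x)))).
  by rewrite hmI.
Qed.
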